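(* For each $m\in\mathbb Z_{\ge1}$, \[\sum_{\ell=0}^{\lfloor m/2\rfloor}\binom{2\ell}{\ell}\sum_{1\le i_1<\cdots<i_{m-2\ell}\le m}\ \prod_{j=1}^{m-2\ell}(x_{i_j}+x_{i_j}^{-1})=\sum_{j=0}^{\lfloor m/2\rfloor}\chi^{\operatorname{Sp}(2m)}_{(1^{m-2j})},\] and \[\prod_{i=1}^m(x_i+x_i^{-1})=\sum_{j=0}^{\lfloor m/2\rfloor}(-1)^j\chi^{\operatorname{Sp}(2m)}_{(1^{m-2j})}.\]
   Context: $\chi_\lambda^{\operatorname{Sp}(2m)}=\chi_\lambda^{\operatorname{Sp}(2m)}(x_1^{\pm1},\dots,x_m^{\pm1})$ is the character of the irreducible representation of $\operatorname{Sp}(2m,\mathbb C)$ with highest weight the partition $\lambda$, evaluated at a torus element with eigenvalues $x_1^{\pm1},\dots,x_m^{\pm1}$; $(1^k)$ is the partition with $k$ parts equal to $1$, and $\chi_{(1^0)}=1$. The inner sum over $1\le i_1<\cdots<i_k\le m$ is set to be $1$ when $k=0$. *)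

(* Defs.v *)
From mathcomp Require Import all_boot all_order all_algebra.
Set Implicit Arguments. Unset Strict Implicit. Unset Printing Implicit Defensive.
Import GRing.Theory.
Local Open Scope ring_scope.

(* Partitions are given as weakly decreasing sequences of parts; the i-th part
   (0-indexed) is nth 0 la i (0 beyond the length). *)
Definition part_one_col (k : nat) : seq nat := nseq k 1%N.

(* Weyl character formula for Sp(2m): for a partition la with at most m parts,
   chi_la(x_1^{+-1},...,x_m^{+-1}) =
     det[ x_j^{la_i+m-i+1} - x_j^{-(la_i+m-i+1)} ]_{i,j} /
     det[ x_j^{m-i+1} - x_j^{-(m-i+1)} ]_{i,j}
   (here with 0-indexed i, the exponent is la_i + m - i). *)
Definition sp_num (F : fieldType) (m : nat) (la : seq nat) (x : 'I_m -> F) : F :=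
  \det (\matrix_(i < m, j < m)
          (x j ^+ (nth 0%N la i + m - i) - (x j ^+ (nth 0%N la i + m - i))^-1)).

Definition sp_den (F : fieldType) (m : nat) (x : 'I_m -> F) : F :=
  \det (\matrix_(i < m, j < m) (x j ^+ (m - i) - (x j ^+ (m - i))^-1)).

Definition sp_char (F : fieldType) (m : nat) (la : seq nat) (x : 'I_m -> F) : F :=
  sp_num la x / sp_den x.

Definition esym_pm (F : fieldType) (m k : nat) (x : 'I_m -> F) : F :=
  \sum_(S : {set 'I_m} | #|S| == k) \prod_(i in S) (x i + (x i)^-1).

(* Main.v *)
Require Import Defs.
From mathcomp Require Import all_boot all_order all_algebra.
From mathcomp Require Import ring zify fingroup perm.
Set Implicit Arguments. Unset Strict Implicit. Unset Printing Implicit Defensive.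
Import GRing.Theory.
Local Open Scope ring_scope.

Section Cheb.
Variable F : fieldType.
Fixpoint cheb2 (d : nat) : {poly F} * {poly F} :=
  match d with 0 => (1, 'X) | d'.+1 => ((cheb2 d').2, 'X * (cheb2 d').2 - (cheb2 d').1) end.
Definition U d := (cheb2 d).1.
Lemma U0 : U 0 = 1. Proof. by []. Qed.
Lemma U1 : U 1 = 'X. Proof. by []. Qed.
Lemma USS d : U d.+2 = 'X * U d.+1 - U d. Proof. by []. Qed.

Lemma U_coef d : (forall i, (d < i)%N -> (U d)`_i = 0) /\ (U d)`_d = 1.
Proof.
suff: ((forall i, (d < i)%N -> (U d)`_i = 0) /\ (U d)`_d = 1) /\
      ((forall i, (d.+1 < i)%N -> (U d.+1)`_i = 0) /\ (U d.+1)`_d.+1 = 1) by case.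
elim: d => [|d [[H0 _] [H1 H2]]].
  rewrite U0 U1; split; split.
  - by move=> i; rewrite coefC; case: i.
  - by rewrite coefC.
  - by move=> i; rewrite coefX; case: i => [|[|]].
  - by rewrite coefX.
split; first by split.
rewrite USS; split.
  move=> i hi; rewrite coefB coefXM; case: i hi => [//|i] hi /=.
  by rewrite H1 // H0 ?subrr // (ltn_trans _ hi).
by rewrite coefB coefXM /= H2 H0 ?subr0.
Qed.


Lemma size_U d : (size (U d) <= d.+1)%N.
Proof. by apply/leq_sizeP => j hj; apply: (proj1 (U_coef d)). Qed.

Lemma U_coef0 d : (U d)`_0 = if odd d then 0 else (-1) ^+ (d./2).
Proof.
suff: (U d)`_0 = (if odd d then 0 else (-1) ^+ (d./2)) /\
      (U d.+1)`_0 = (if odd d.+1 then 0 else (-1) ^+ ((d.+1)./2)) by case.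
elim: d => [|d [H1 H2]]; first by rewrite U0 U1 coefC coefX.
split => //; rewrite USS coefB coefXM /= H1 /=.
by case: (odd d) => /=; rewrite ?subr0 ?sub0r ?oppr0 // exprS mulN1r.
Qed.

Lemma U_eval (x : F) : x != 0 -> forall d,
  (x - x^-1) * (U d).[x + x^-1] = x ^+ d.+1 - (x ^+ d.+1)^-1.
Proof.
move=> x0 d.
have xv : x * x^-1 = 1 by rewrite mulfV.
suff: (x - x^-1) * (U d).[x + x^-1] = x ^+ d.+1 - (x ^+ d.+1)^-1 /\
      (x - x^-1) * (U d.+1).[x + x^-1] = x ^+ d.+2 - (x ^+ d.+2)^-1 by case.
elim: d => [|d [H1 H2]].
  rewrite U0 U1 hornerC hornerX mulr1; split; first by rewrite expr1.
  rewrite -exprVn !expr2; set v := x^-1.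
  by rewrite mulrDr !mulrBl -/v (mulrC v x) xv; rewrite addrA subrK.
split => //.
rewrite USS hornerD hornerN hornerM hornerX mulrDr mulrN mulrCA H2 H1.
rewrite -!exprVn; set v := x^-1.
rewrite [x ^+ d.+3]exprS [v ^+ d.+3]exprS.
rewrite [x ^+ d.+2]exprS [v ^+ d.+2]exprS.
have e1 : v * (x * x ^+ d.+1) = x ^+ d.+1 by rewrite mulrA (mulrC v) xv mul1r.
have e2 : x * (v * v ^+ d.+1) = v ^+ d.+1 by rewrite mulrA xv mul1r.
rewrite mulrDl !mulrBr e1 e2.
set a := x * _; set b := v * _; set c := x ^+ d.+1; set e := v ^+ d.+1.
ring.
Qed.

End Cheb.
Arguments U {F} d.
Arguments U0 {F}.
Arguments U1 {F}.
Arguments USS {F} d.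
Arguments U_coef {F} d.
Arguments size_U {F} d.
Arguments U_coef0 {F} d.

Section Vieta.
Variable F : fieldType.

Lemma vieta m (c : 'I_m -> F) k : (k <= m)%N ->
  (\prod_(i < m) ('X - (c i)%:P))`_k =
  (-1) ^+ (m - k) * \sum_(S : {set 'I_m} | #|S| == (m - k)%N) \prod_(i in S) c i.
Proof.
move=> km.
under eq_bigr => i _ do rewrite addrC -raddfN/=.
rewrite bigA_distr /= coef_sum.
transitivity (\sum_(I in {set 'I_m}) if #|I| == (m - k)%N then
                  \prod_(i < m | i \in I) - c i else 0).
  apply eq_bigr => I _.
  rewrite big_if/= big_const iter_mulr_1 -rmorph_prod/= coefCM coefXn.
  rewrite -[#|I| == _](eqn_add2r k) subnK//.
  rewrite -[X in (_ + _)%N == X]card_ord -(cardC I) eqn_add2l.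
  by case: ifP; rewrite ?mulr1 ?mulr0.
by rewrite -big_mkcond mulr_sumr/=; apply: eq_bigr => I /eqP <-; rewrite prodrN.
Qed.

Lemma sum_even (f : nat -> F) n :
  \sum_(i < n.+1) (if odd i then 0 else f i) = \sum_(l < n./2.+1) f l.*2.
Proof.
elim: n => [|n IH]; first by rewrite !big_ord1.
rewrite big_ord_recr /= IH.
have := odd_double_half n; rewrite uphalf_half -!muln2.
case h: (odd n) => /= hn.
  rewrite add1n [RHS]big_ord_recr /=; congr (_ + _); congr f.
  by rewrite -muln2; lia.
by rewrite addr0 add0n.
Qed.

End Vieta.

Section Moment.
Variable F : fieldType.

Lemma sum_pick_half (h : nat -> F) i :
  \sum_(k < i.+1) (if i == k.*2 then h k else 0) = if odd i then 0 else h i./2.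
Proof.
case hi: (odd i).
  by rewrite big1 // => k _; case: eqP => // e; have := odd_double k; rewrite -e hi.
have lt : (i./2 < i.+1)%N by have := odd_double_half i; rewrite -muln2; case: (odd i) => /=; lia.
rewrite (bigD1 (Ordinal lt)) //= big1 ?addr0.
  by rewrite -{1}(odd_double_half i) hi add0n eqxx.
move=> k /eqP nk; case: eqP => // e; exfalso; apply: nk; apply: val_inj => /=.
by rewrite [in RHS]e doubleK.
Qed.

Definition gm (i : nat) : F := ((1 + 'X ^+ 2 : {poly F}) ^+ i)`_i.

Lemma gmE i : gm i = if odd i then 0 else ('C(i, i./2))%:R.
Proof.
rewrite /gm addrC exprD1n coef_sum.
rewrite -(sum_pick_half (fun k => ('C(i, k))%:R)).
apply: eq_bigr => k _; rewrite coefMn -exprM coefXn.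
by rewrite mul2n; case: eqP => _; rewrite ?mulr1n ?mul0rn.
Qed.

Variable N : nat.
Definition G (P : {poly F}) : {poly F} :=
  \sum_(i < N.+1) P`_i *: ((1 + 'X ^+ 2) ^+ i * 'X ^+ (N - i)%N).

Lemma GB p q : G (p - q) = G p - G q.
Proof.
by rewrite /G -sumrB; apply: eq_bigr => i _; rewrite coefB scalerBl.
Qed.

Lemma GX (P : {poly F}) : (size P <= N)%N -> 'X * G ('X * P) = (1 + 'X ^+ 2) * G P.
Proof.
move=> sP; rewrite /G big_ord_recl coefXM /= scale0r add0r.
rewrite [in RHS]big_ord_recr /= (leq_sizeP _ _ sP) // scale0r addr0.
rewrite !mulr_sumr; apply: eq_bigr => i _.
rewrite coefXM /= -!scalerAr; congr (_ *: _).
rewrite /bump /= add1n exprS.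
have -> : (N - i = (N - i.+1).+1)%N by rewrite subnSK.
by rewrite [_ ^+ (N - i.+1).+1]exprSr mulrC !mulrA.
Qed.

Definition S d : {poly F} := \sum_(j < d.+1) 'X ^+ (j.*2).

Lemma GU d : (d <= N)%N -> G (U d) = 'X ^+ (N - d)%N * S d.
Proof.
suff: ((d <= N)%N -> G (U d) = 'X ^+ (N - d)%N * S d) /\
      ((d.+1 <= N)%N -> G (U d.+1) = 'X ^+ (N - d.+1)%N * S d.+1) by case.
elim: d => [|d [H1 H2]].
  split => hN.
    rewrite /S big_ord1 /G U0 (big_ord_recl N) coefC /= subn0 expr0 mul1r mulr1 scale1r.
    by rewrite big1 ?addr0 // => i _; rewrite coefC /= scale0r.
  apply: (@mulfI _ 'X); first by rewrite polyX_eq0.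
  rewrite U1 -[X in G X]mulr1 GX ?size_poly1 //.
  rewrite /G (big_ord_recl N) coefC /= subn0 expr0 mul1r scale1r.
  rewrite big1 ?addr0 => [|i _]; last by rewrite coefC /= scale0r.
  rewrite /S big_ord_recr big_ord1 /=.
  have -> : (N = (N - 1).+1)%N by lia.
  rewrite subSS subn0 !exprS; ring.
split => // hN.
have hd1 : (d.+1 <= N)%N by lia.
have hd0 : (d <= N)%N by lia.
apply: (@mulfI _ 'X); first by rewrite polyX_eq0.
rewrite USS GB mulrBr GX; last by apply: leq_trans (size_U _) _.
rewrite H2 // H1 //.
have eS1 : S d.+1 = S d + 'X^((d.+1).*2) by rewrite /S big_ord_recr.
have eS2 : S d.+2 = S d.+1 + 'X^((d.+2).*2) by rewrite /S big_ord_recr.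
rewrite eS2 eS1; set s := S d.
have e1 : (N - d = (N - d.+2).+2)%N by lia.
have e2 : (N - d.+1 = (N - d.+2).+1)%N by lia.
rewrite e1 e2 !doubleS !exprS; ring.
Qed.

Lemma coefG (P : {poly F}) : (G P)`_N = \sum_(i < N.+1) P`_i * gm i.
Proof.
rewrite /G coef_sum; apply: eq_bigr => i _.
by rewrite coefZ coefMXn ltnNge leq_subr /= subKn // -ltnS.
Qed.

Lemma PhiU d : (d <= N)%N ->
  \sum_(i < N.+1) (U d)`_i * gm i = if odd d then 0 else 1.
Proof.
move=> dN; rewrite -coefG GU // coefXnM ltnNge leq_subr /= subKn //.
rewrite /S coef_sum -(sum_pick_half (fun _ => 1)).
by apply: eq_bigr => k _; rewrite coefXn; case: eqP.
Qed.

End Moment.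

Section Mat.
Variable F : fieldType.
Variable m : nat.
Variable yv : 'I_m -> F.

Definition exU (k : nat) (i : 'I_m) : nat :=
  if (i < k)%N then (m - i)%N else (m - i.+1)%N.
Definition B k := \det (\matrix_(i < m, j < m) (U (exU k i)).[yv j]).
Definition av (j : 'I_m.+1) : {poly F} :=
  if unlift ord_max j is Some j' then (yv j')%:P else 'X.
Definition QU := \matrix_(r < m.+1, j < m.+1) ((map_poly polyC (U (m - r))).[av j]).
Definition QX := \matrix_(r < m.+1, j < m.+1) av j ^+ (m - r).
Definition T := \matrix_(r < m.+1, k < m.+1) (((@U F (m - r))`_(m - k))%:P : {poly F}).

Lemma QU_T : QU = T *m QX.
Proof.
apply/matrixP => r j; rewrite !mxE.
rewrite (@horner_coef_wide _ m.+1); last first.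
  by rewrite size_map_polyC; apply: leq_trans (size_U _) _; rewrite ltnS leq_subr.
rewrite [RHS](reindex_inj rev_ord_inj) /=; apply: eq_bigr => k _.
rewrite !mxE coef_map /= subSS subKn //; by rewrite -ltnS.
Qed.

Lemma detT : \det T = 1.
Proof.
rewrite -det_tr det_trig; last first.
  apply/is_trig_mxP => i j ij; rewrite !mxE.
  rewrite (proj1 (U_coef _)) //; have := ltn_ord j; have := ltn_ord i; lia.
by rewrite big1 // => i _; rewrite !mxE (proj2 (U_coef _)).
Qed.

Lemma av_lift (j : 'I_m) : av (lift ord_max j) = (yv j)%:P.
Proof. by rewrite /av liftK. Qed.

Lemma av_widen (j : 'I_m) : av (widen_ord (leqnSn m) j) = (yv j)%:P.
Proof. have -> : widen_ord (leqnSn m) j = lift ord_max j by apply: val_inj; rewrite [RHS]lift_max.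
by rewrite av_lift. Qed.

Lemma detQX : exists c, \det QX = c%:P * \prod_(i < m) ('X - (yv i)%:P).
Proof.
pose s := (perm (@rev_ord_inj m.+1) : {perm 'I_m.+1}).
have -> : QX = row_perm s (Vandermonde m.+1 (\row_j av j)).
  by apply/matrixP => r j; rewrite /row_perm !mxE /= /s permE.
rewrite row_permE det_mulmx det_perm det_Vandermonde.
rewrite big_ord_recr /= [X in _ * (_ * X)]big_pred0; last first.
  by move=> j; rewrite ltnNge -ltnS ltn_ord.
rewrite mulr1.
have E : forall i : 'I_m, \prod_(j < m.+1 | (i < j)%N)
    ((\row_j0 av j0) 0 j - (\row_j0 av j0) 0 (widen_ord (leqnSn m) i)) =
    (\prod_(j < m | (i < j)%N) (yv j - yv i))%:P * ('X - (yv i)%:P).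
  move=> i; rewrite big_mkcond big_ord_recr /= [in RHS]big_mkcond rmorph_prod.
  congr (_ * _).
    apply: eq_bigr => j _; rewrite !mxE !av_widen /=.
    by case: ifP => _; rewrite ?rmorphB ?rmorph1.
  by rewrite ltn_ord !mxE av_widen /av unlift_none.
rewrite (eq_bigr _ (fun i _ => E i)) big_split /= -rmorph_prod.
exists ((-1) ^+ s * \prod_(i < m) \prod_(j < m | (i < j)%N) (yv j - yv i)).
by rewrite mulrA rmorphM /= rmorph_sign.
Qed.

Lemma horner_mapX (p : {poly F}) : (map_poly polyC p).['X] = p.
Proof.
rewrite horner_coef size_map_polyC -[in RHS](coefK p) poly_def; apply: eq_bigr => i _.
by rewrite coef_map /= mul_polyC.
Qed.

Lemma detQU : \det QU = \sum_(r < m.+1) U (m - r) * ((-1) ^+ (r + m) * B r)%:P.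
Proof.
rewrite (expand_det_col _ ord_max); apply: eq_bigr => r _.
rewrite /cofactor !mxE /av unlift_none horner_mapX; congr (_ * _).
rewrite rmorphM rmorph_sign /=; congr (_ * _).
rewrite /B -det_map_mx; congr (\det _); apply/matrixP => i j; rewrite !mxE av_lift horner_map /=.
by rewrite /exU /= /bump; case: ltnP => h; rewrite ?add0n ?add1n.
Qed.

Lemma prodX_lead : (\prod_(i < m) ('X - (yv i)%:P))`_m = 1.
Proof.
rewrite vieta // subnn expr0 mul1r.
rewrite (eq_bigl (pred1 set0)) => [|S]; last by rewrite /= cards_eq0.
by rewrite big_pred1_eq big_set0.
Qed.

Lemma core (g : nat -> F) :
  \sum_(r < m.+1) (\sum_(k < m.+1) (U (m - r))`_k * g k) * ((-1) ^+ (r + m) * B r)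
  = (-1) ^+ m * B 0 *
    \sum_(k < m.+1) (\prod_(i < m) ('X - (yv i)%:P))`_k * g k.
Proof.
have [c hc] := detQX.
have key : \sum_(r < m.+1) U (m - r) * ((-1) ^+ (r + m) * B r)%:P
    = c%:P * \prod_(i < m) ('X - (yv i)%:P).
  by rewrite -detQU QU_T det_mulmx detT mul1r.
have lin : forall h : nat -> F,
    \sum_(k < m.+1) (\sum_(r < m.+1) U (m - r) * ((-1) ^+ (r + m) * B r)%:P)`_k * h k
    = \sum_(r < m.+1) (\sum_(k < m.+1) (U (m - r))`_k * h k) * ((-1) ^+ (r + m) * B r).
  move=> h; under eq_bigr do rewrite coef_sum mulr_suml.
  rewrite exchange_big; apply: eq_bigr => r _; rewrite mulr_suml.
  by apply: eq_bigr => k _; rewrite coefMC mulrAC.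
have hc0 : c = (-1) ^+ m * B 0.
  have := congr1 (fun p : {poly F} => p`_m) key.
  rewrite coef_sum coefCM prodX_lead mulr1 => <-.
  rewrite (bigD1 ord0) //= big1 ?addr0 => [|r /eqP r0].
    by rewrite coefMC subn0 (proj2 (U_coef m)) mul1r add0n.
  rewrite coefMC (proj1 (U_coef _)) ?mul0r //.
  have : (0 < r)%N by rewrite lt0n; apply/eqP => h; apply: r0; apply: val_inj.
  have := ltn_ord r; lia.
rewrite -(lin g) key -hc0.
by rewrite mulr_sumr; apply: eq_bigr => k _; rewrite coefCM mulrA.
Qed.

End Mat.

Section Final.
Variable F : fieldType.

Lemma sgn_even (a b : nat) : (b <= a)%N -> ~~ odd b -> (-1) ^+ ((a - b) + a) = 1 :> F.
Proof.
move=> ba hb; rewrite -signr_odd oddD oddB // (negbTE hb) addbF.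
by rewrite addbb expr0.
Qed.

Lemma aux5 (R : comRingType) (a b c d g : R) :
  g * d * (a * b * c) = d * c * (g * b * a).
Proof. ring. Qed.

Lemma rev_sum (f : nat -> F) n :
  \sum_(r < n.+1) f r = \sum_(d < n.+1) f (n - d)%N.
Proof.
rewrite (reindex_inj rev_ord_inj); apply: eq_bigr => d _; by rewrite /= subSS.
Qed.

Variable m : nat.
Variable x : 'I_m -> F.
Hypothesis hx : forall i, x i != 0.
Let yv i := x i + (x i)^-1.
Let wv i := x i - (x i)^-1.

Lemma spnumE k : sp_num (part_one_col k) x = (\prod_j wv j) * B yv k.
Proof.
have -> : \prod_j wv j = \det (diag_mx (\row_j wv j)).
  by rewrite det_diag; apply: eq_bigr => j _; rewrite mxE.
rewrite /sp_num /B mulrC -det_mulmx mul_mx_diag; congr (\det _).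
apply/matrixP => i j; rewrite !mxE /wv /yv mulrC U_eval // nth_nseq /exU.
have := ltn_ord i; case: (ltnP i k) => h hi /=; congr (x j ^+ _ - (x j ^+ _)^-1); lia.
Qed.

Lemma spdenE : sp_den x = sp_num (part_one_col 0) x.
Proof.
by rewrite /sp_den /sp_num; congr (\det _); apply/matrixP => i j; rewrite !mxE nth_nil add0n.
Qed.

Lemma claim2 : \prod_(i < m) yv i * B yv 0 =
  \sum_(l < m./2.+1) (-1) ^+ l * B yv (m - l.*2).
Proof.
have := core yv (fun k => (k == 0%N)%:R).
have inner : forall p : {poly F}, \sum_(k < m.+1) p`_k * (nat_of_ord k == 0%N)%:R = p`_0.
  move=> p; rewrite big_ord_recl /= mulr1 big1 ?addr0 // => k _; by rewrite mulr0.
under eq_bigr => r _ do rewrite inner.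
rewrite inner coef0_prod.
under [X in _ = _ * X -> _]eq_bigr => i _ do rewrite coefB coefX coefC /= sub0r.
rewrite prodrN card_ord.
rewrite (rev_sum (fun r : nat => (U (m - r))`_0 * ((-1) ^+ (r + m) * B yv r))).
pose f := fun d : nat => (-1) ^+ (d./2) * B yv (m - d).
rewrite (eq_bigr (fun d : 'I_m.+1 => if odd d then 0 else f d)); last first.
  move=> d _; rewrite subKn; last by rewrite -ltnS.
  rewrite U_coef0 /f.
  case h: (odd d); first by rewrite mul0r.
  by rewrite sgn_even ?mul1r ?h // -ltnS.
rewrite sum_even => H.
rewrite (eq_bigr (fun l : 'I_(m./2.+1) => f l.*2)); last by move=> l _; rewrite /f doubleK.
rewrite H.
have sq : (-1) ^+ m * (-1) ^+ m = 1 :> F by rewrite -exprD -signr_odd oddD addbb.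
by rewrite [RHS]mulrACA sq mul1r mulrC.
Qed.

Lemma claim1 :
  (\sum_(l < m./2.+1) ('C(l.*2, l))%:R * esym_pm (m - l.*2) x) * B yv 0 =
  \sum_(l < m./2.+1) B yv (m - l.*2).
Proof.
have := core yv (@gm F).
under eq_bigr => r _ do rewrite (@PhiU F m _ (leq_subr _ _)).
have vE : forall k : 'I_m.+1,
    (\prod_(i < m) ('X - (yv i)%:P))`_k = (-1) ^+ (m - k) * esym_pm (m - k) x.
  by move=> k; rewrite vieta // -ltnS.
under [X in _ = _ * X -> _]eq_bigr => k _ do rewrite vE gmE.
rewrite (rev_sum (fun r : nat => (if odd (m - r) then 0 else 1) * ((-1) ^+ (r + m) * B yv r))).
rewrite (eq_bigr (fun d : 'I_m.+1 => if odd d then 0 else B yv (m - d))); last first.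
  move=> d _; rewrite subKn; last by rewrite -ltnS.
  case h: (odd d); first by rewrite mul0r.
  by rewrite sgn_even ?mul1r ?h // -ltnS.
rewrite (sum_even (fun d => B yv (m - d))).
pose f := fun k : nat => (-1) ^+ (m - k) * esym_pm (m - k) x * ('C(k, k./2))%:R.
rewrite (eq_bigr (fun k : 'I_m.+1 => if odd k then 0 else f k)); last first.
  by move=> k _; rewrite /f; case: (odd k); rewrite ?mulr0.
rewrite (sum_even f) => ->.
rewrite mulr_suml mulr_sumr; apply: eq_bigr => l _.
have hl : (l.*2 <= m)%N.
  have := ltn_ord l; rewrite ltnS => hl; have := odd_double_half m.
  by rewrite -!muln2 in hl *; case: (odd m) => /=; lia.
rewrite /f doubleK.
have := sgn_even hl (negbT (odd_double l)); rewrite exprD => e.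
rewrite -[LHS]mul1r -{1}e; exact: aux5.
Qed.

End Final.

Theorem mainTheorem3 (F : fieldType) (m : nat) (x : 'I_m -> F) :
  (0 < m)%N ->
  (forall i, x i != 0) ->
  sp_den x != 0 ->
  (\sum_(0 <= l < (m./2).+1)
      ('C(l.*2, l))%:R * esym_pm (m - l.*2) x
    = \sum_(0 <= j < (m./2).+1) sp_char (part_one_col (m - j.*2)) x)
  /\
  (\prod_(i < m) (x i + (x i)^-1)
    = \sum_(0 <= j < (m./2).+1) (-1) ^+ j * sp_char (part_one_col (m - j.*2)) x).
Proof.
move=> hm hx hD.
set yv := fun i => x i + (x i)^-1.
have hD' : sp_den x = (\prod_j (x j - (x j)^-1)) * B yv 0 by rewrite spdenE spnumE.
have [P0 B0] : (\prod_j (x j - (x j)^-1)) != 0 /\ B yv 0 != 0.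
  by apply/andP; rewrite -negb_or -mulf_eq0 -hD'.
have chE : forall k, sp_char (part_one_col k) x = B yv k / B yv 0.
  by move=> k; rewrite /sp_char spnumE // hD' invfM mulrACA divff // mul1r.
rewrite !big_mkord; split.
  under [RHS]eq_bigr do rewrite chE.
  by rewrite -mulr_suml -(claim1 x) mulfK.
under [RHS]eq_bigr do rewrite chE mulrA.
by rewrite -mulr_suml -(claim2 x) mulfK.
Qed.
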